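(* Let $n\ge4$, $x_1,\dots,x_{n-1}>0$, $\gamma,\delta>0$ with $\gamma\ne1\ne\delta$, $x_0=1$, and let $\mathbf{P}$ be the $n\times n$ matrix with entries $p_{ij}=x_{j-1}/x_{i-1}$ except $p_{12}=\delta x_1$, $p_{21}=1/(\delta x_1)$, $p_{13}=\gamma x_2$, $p_{31}=1/(\gamma x_2)$. Let $\mathbf{w}^{EM}$ be the principal right eigenvector of $\mathbf{P}$. Then for $i=4,\dots,n$: $\delta>1$ iff $w_2^{EM}/w_i^{EM}<x_{i-1}/x_1$, and $\delta<1$ iff $w_2^{EM}/w_i^{EM}>x_{i-1}/x_1$.
   Context: The principal right eigenvector is the positive (Perron) eigenvector belonging to the largest eigenvalue. *)

(* Defs.v *)
From HB Require Import structures.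
From mathcomp Require Import all_boot all_order all_algebra.
Set Implicit Arguments. Unset Strict Implicit. Unset Printing Implicit Defensive.
Import Order.TTheory GRing.Theory Num.Theory.
Local Open Scope ring_scope.

(* Indices are 0-based: entry (i,j) of the paper (1-based) is entry (i-1,j-1) here.
   x : nat -> R with x 0 = 1 intended; p_ij = x_{j-1}/x_{i-1} except the four
   perturbed entries p12 = delta x1, p21 = 1/(delta x1), p13 = gamma x2,
   p31 = 1/(gamma x2). *)
Definition pertMx (R : fieldType) (n : nat) (x : nat -> R) (gamma delta : R)
  : 'M[R]_n :=
  \matrix_(i < n, j < n)
    if ((i == 0 :> nat) && (j == 1 :> nat)) then delta * x 1%N
    else if ((i == 1 :> nat) && (j == 0 :> nat)) then (delta * x 1%N)^-1
    else if ((i == 0 :> nat) && (j == 2 :> nat)) then gamma * x 2%N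
    else if ((i == 2 :> nat) && (j == 0 :> nat)) then (gamma * x 2%N)^-1
    else x j / x i.

Definition principal_right_eigenvector (R : realFieldType) (n : nat)
  (A : 'M[R]_n) (w : 'cV[R]_n) : Prop :=
  (forall i, 0 < w i 0) /\
  exists lambda : R,
    [/\ eigenvalue A lambda,
        A *m w = lambda *: w &
        forall mu : R, eigenvalue A mu -> mu <= lambda].

(* Main.v *)
Require Import Defs.
From HB Require Import structures.
From mathcomp Require Import all_boot all_order all_algebra.
From mathcomp Require Import zify ring lra.
Import Order.TTheory GRing.Theory Num.Theory.
Local Open Scope ring_scope.

Theorem mainTheorem10 (R : realFieldType) (n : nat) (x : nat -> R)
  (gamma delta : R) (w : 'cV[R]_n) :
  (4 <= n)%N ->
  x 0%N = 1 ->
  (forall k : nat, (1 <= k <= n.-1)%N -> 0 < x k) ->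
  0 < gamma -> 0 < delta -> gamma != 1 -> delta != 1 ->
  principal_right_eigenvector (pertMx n x gamma delta) w ->
  forall i1 i : 'I_n, nat_of_ord i1 = 1%N -> (3 <= i)%N ->
    (1 < delta <-> w i1 0 / w i 0 < x i / x 1%N) /\
    (delta < 1 <-> w i1 0 / w i 0 > x i / x 1%N).
Proof.
move=> hn hx0 hxpos hg hd hg1 hd1 [wpos [l [_ hAw _]]] i1 i hi1 hi3.
have xpos : forall j : 'I_n, 0 < x j.
  move=> j; case: (posnP j) => [->|hj]; first by rewrite hx0.
  apply: hxpos; have := ltn_ord j; lia.
have row : forall k, \sum_j pertMx n x gamma delta k j * w j 0 = l * w k 0.
  move=> k; have := congr1 (fun M : 'cV[R]_n => M k 0) hAw; rewrite !mxE => <-.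
  done.
have h0n : (0 < n)%N by lia.
pose j0 : 'I_n := Ordinal h0n.
set T := \sum_(j < n) x j * w j 0.
have hi : l * w i 0 * x i = T.
  rewrite -(row i) mulr_suml; apply: eq_bigr => j _; rewrite mxE.
  have e0 : (nat_of_ord i == 0%N) = false by apply/eqP; lia.
  have e1 : (nat_of_ord i == 1%N) = false by apply/eqP; lia.
  have e2 : (nat_of_ord i == 2%N) = false by apply/eqP; lia.
  rewrite e0 e1 e2 /=.
  have := xpos i; rewrite lt0r => /andP [hxi _]; ((field; rewrite ?mulf_neq0 ?hdd ?hx1 ?hxi //); rewrite ?mulf_neq0 ?hdd ?hx1 ?hxi //).
have x1pos : 0 < x 1%N by rewrite -hi1; apply: xpos.
have h1 : l * w i1 0 * x 1%N = T - w j0 0 + w j0 0 / delta.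
  rewrite -(row i1) mulr_suml /T (bigD1 j0) //= [in RHS](bigD1 j0) //=.
  rewrite mxE hi1 /= hx0.
  rewrite (eq_bigr (fun j : 'I_n => x j * w j 0)); last first.
    move=> k hk; rewrite mxE hi1 /=.
    have e : (nat_of_ord k == 0%N) = false.
      apply/eqP => h; move/eqP: hk; apply; apply/val_inj; rewrite /= h //.
    rewrite e /=. have := x1pos; rewrite lt0r => /andP [hx1 _]; ((field; rewrite ?mulf_neq0 ?hdd ?hx1 ?hxi //); rewrite ?mulf_neq0 ?hdd ?hx1 ?hxi //).
  have := x1pos; rewrite lt0r => /andP [hx1 _].
  have := hd; rewrite lt0r => /andP [hdd _]. ((field; rewrite ?mulf_neq0 ?hdd ?hx1 ?hxi //); rewrite ?mulf_neq0 ?hdd ?hx1 ?hxi //).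
have Tpos : 0 < T.
  rewrite /T (bigD1 j0) //=.
  have : 0 <= \sum_(j < n | j != j0) x j * w j 0.
    by apply: sumr_ge0 => j _; rewrite mulr_ge0 // ltW.
  have := mulr_gt0 (xpos j0) (wpos j0). lra.
have lpos : 0 < l.
  have := mulr_gt0 (wpos i) (xpos i); rewrite -hi in Tpos.
  move=> h; move: Tpos; rewrite -mulrA pmulr_lgt0 //.
set D := x i * w i 0 - x 1%N * w i1 0.
have key : l * D * delta = w j0 0 * (delta - 1).
  rewrite /D. have := hd; rewrite lt0r => /andP [hdd _].
  have e : l * (x i * w i 0 - x 1%N * w i1 0) * delta
     = (l * w i 0 * x i - l * w i1 0 * x 1%N) * delta by ring.
  rewrite e hi h1; ((field; rewrite ?mulf_neq0 ?hdd ?hx1 ?hxi //); rewrite ?mulf_neq0 ?hdd ?hx1 ?hxi //).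
have w0 := wpos j0; have wi := wpos i; have xi := xpos i.
have eq1 : (w i1 0 / w i 0 < x i / x 1%N) = (0 < D).
  rewrite ltr_pdivrMr // mulrAC ltr_pdivlMr // /D; apply/idP/idP; lra.
have eq2 : (x i / x 1%N < w i1 0 / w i 0) = (D < 0).
  rewrite ltr_pdivrMr // mulrAC ltr_pdivlMr // /D; apply/idP/idP; lra.
rewrite eq1 eq2.
have sD : (0 < D) = (0 < l * D * delta) by rewrite pmulr_lgt0 // pmulr_rgt0.
have sD' : (D < 0) = (l * D * delta < 0) by rewrite pmulr_llt0 // pmulr_rlt0.
rewrite sD sD' key pmulr_rgt0 // pmulr_rlt0 //.
by rewrite subr_gt0 subr_lt0.
Qed.
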